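(* Let $f:\mathbb{R}^d \to \mathbb{R}$ be concave, with hypograph $f^- = \{(u;z) \in \mathbb{R}^{d+1} : z \leq f(u)\}$. Let $x \in f^-$ and $\lambda \geq 0$. Then for all $y \in M^{\lambda}_{f^-}(x)$ with $y \in f^-$, $$(1 - \lambda)\cdot \mathrm{ray}_{f^-}(x) \leq \mathrm{ray}_{f^-}(y) \leq (1 + \lambda)\cdot \mathrm{ray}_{f^-}(x).$$
   Context: For a point $w = (u;z) \in f^-$, the ray distance $\mathrm{ray}_{f^-}(w) = f(u) - z$ is the length of the segment from $w$ vertically upward (in the direction of the last coordinate) to the boundary of $f^-$. For a convex set $K$, $p \in K$ and $\lambda \geq 0$, the $\lambda$-scaled Macbeath region is $M^{\lambda}_K(p) = p + \lambda\big((K - p) \cap (p - K)\big)$. *)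

(* Defs.v *)
(* Points of R^(d+1) are pairs (u, z) : 'rV[R]_d * R. *)
From mathcomp Require Import all_boot all_order all_algebra.
Set Implicit Arguments. Unset Strict Implicit. Unset Printing Implicit Defensive.
Import Order.TTheory GRing.Theory Num.Theory.
Local Open Scope ring_scope.

Definition point (R : pzRingType) (d : nat) := ('rV[R]_d * R)%type.

Definition padd (R : pzRingType) d (p q : point R d) : point R d := (p.1 + q.1, p.2 + q.2).
Definition psub (R : pzRingType) d (p q : point R d) : point R d := (p.1 - q.1, p.2 - q.2).
Definition pscale (R : pzRingType) d (a : R) (p : point R d) : point R d := (a *: p.1, a * p.2).

Definition concave_fun (R : realFieldType) d (f : 'rV[R]_d -> R) : Prop :=
  forall (u v : 'rV[R]_d) (t : R), 0 <= t -> t <= 1 ->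
    t * f u + (1 - t) * f v <= f (t *: u + (1 - t) *: v).

Definition hypograph (R : realFieldType) d (f : 'rV[R]_d -> R) : point R d -> Prop :=
  fun w => w.2 <= f w.1.

Definition ray_hypo (R : realFieldType) d (f : 'rV[R]_d -> R) (w : point R d) : R :=
  f w.1 - w.2.

(* scaled Macbeath region M^lam_K(p) = p + lam ((K - p) ∩ (p - K)) *)
Definition macbeath (R : realFieldType) d (K : point R d -> Prop) (lam : R)
  (p : point R d) : point R d -> Prop :=
  fun y => exists w : point R d,
    (exists k, K k /\ w = psub k p) /\ (exists k, K k /\ w = psub p k) /\
    y = padd p (pscale lam w).

(* Main.v *)
Require Import Defs.
From mathcomp Require Import all_boot all_order all_algebra.
From mathcomp Require Import ring lra.
Import Order.TTheory GRing.Theory Num.Theory.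
Local Open Scope ring_scope.

Theorem lemma10 (R : realFieldType) (d : nat) (f : 'rV[R]_d -> R)
  (hf : concave_fun f) (x : point R d) (hx : hypograph f x)
  (lam : R) (hlam : 0 <= lam) :
  forall y : point R d, macbeath (hypograph f) lam x y -> hypograph f y ->
    (1 - lam) * ray_hypo f x <= ray_hypo f y /\
    ray_hypo f y <= (1 + lam) * ray_hypo f x.
Proof.
case: x hx => u z hx [yu yz] [[a b] [[[p1 q1] [h1 e1]] [[[p2 q2] [h2 e2]] ey]]] hy.
rewrite /hypograph /= in hx hy h1 h2.
rewrite /ray_hypo /=.
case: e1 => ea1 eb1; case: e2 => ea2 eb2.
case: ey => eyu eyz; subst yu yz.
rewrite /= in hy *.
split.
- have [lam1|lam1] := lerP 1 lam.
    have : 0 <= f u - z by lra.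
    have : 0 <= f (u + lam *: a) - (z + lam * b) by lra.
    nra.
  have hc := hf p1 u lam hlam (ltW lam1).
  have E : lam *: p1 + (1 - lam) *: u = u + lam *: a.
    by rewrite ea1 scalerBr scalerBl scale1r addrCA.
  rewrite E in hc.
  have : lam * q1 <= lam * f p1 by rewrite ler_wpM2l.
  rewrite eb1. nra.
- set t := (1 + lam)^-1.
  have hp : 0 < 1 + lam by lra.
  have ht : t * (1 + lam) = 1 by rewrite mulVf // gt_eqF.
  have t0 : 0 <= t by rewrite invr_ge0 ltW.
  have t1 : t <= 1 by rewrite invr_le1 // ?unitf_gt0 //; lra.
  have hc := hf (u + lam *: a) p2 t t0 t1.
  have E : t *: (u + lam *: a) + (1 - t) *: p2 = u.
    have -> : p2 = u - a by rewrite ea2 opprB addrC subrK.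
    have -> : 1 - t = t * lam by rewrite -[X in X - t]ht; ring.
    rewrite scalerDr scalerBr scalerA addrACA subrr addr0 -scalerDl.
    have -> : t + t * lam = 1 by rewrite -ht; ring.
    by rewrite scale1r.
  rewrite E in hc.
  have hq : 1 - t = t * lam by rewrite -[X in X - t]ht; ring.
  rewrite hq in hc.
  have : t * lam * (z - b) <= t * lam * f p2.
    rewrite ler_wpM2l //; first by rewrite mulr_ge0.
    by rewrite eb2 opprB addrC subrK.
  move=> h.
  have : f (u + lam *: a) <= (1 + lam) * f u - lam * (z - b).
    have : t * f (u + lam *: a) <= f u - t * lam * (z - b) by lra.
    move=> h'; have := ler_wpM2l (ltW hp) h'.
    have e1 : (1 + lam) * (t * f (u + lam *: a)) = f (u + lam *: a).
      by rewrite mulrA (mulrC (1+lam)) ht mul1r.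
    have e2 : (1 + lam) * (t * lam * (z - b)) = lam * (z - b).
      by rewrite !mulrA (mulrC (1+lam)) ht mul1r.
    by rewrite mulrBr e1 e2.
  lra.
Qed.
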